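(* There is an absolute constant $C$ such that the following holds: if $\Gamma_\mathcal{D}$ is the incidence graph of an $\mathrm{STD}_\lambda[k;g]$ (with $\lambda\ge1$, $g\ge2$), having $n=2\lambda g^2$ vertices, then $\mu(\Gamma_\mathcal{D})\le C\sqrt{n}\log n$; that is, $\mu(\Gamma_\mathcal{D})=O(\sqrt{n}\log n)$.
   Context: A transversal design $\mathrm{TD}_\lambda[k;g]$ ($g\ge2$) is a triple $(X,\mathcal{G},\mathcal{B})$ where $X$ is a set of $kg$ points, $\mathcal{G}$ is a partition of $X$ into $k$ point classes of size $g$, and $\mathcal{B}$ is a family of $k$-subsets of $X$ (blocks) such that each block contains exactly one point of each point class and any two points from distinct point classes lie in exactly $\lambda$ blocks. It is symmetric (an $\mathrm{STD}_\lambda[k;g]$) if its dual (interchanging points and blocks) is also a $\mathrm{TD}_\lambda[k;g]$; then $k=\lambda g$ and $|X|=|\mathcal{B}|=\lambda g^2$. The incidence graph is the bipartite graph on $X\cup\mathcal{B}$ with $x$ adjacent to $B$ iff $x\in B$. A resolving set of a connected graph is a set $S$ of vertices such that for any two distinct vertices $u,w$ some $s\in S$ has $d(u,s)\neq d(w,s)$; the metric dimension $\mu(\Gamma)$ is the minimum size of a resolving set. *)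

(* Defs.v *)
From mathcomp Require Import all_boot.

(* Points form the finType X, blocks the finType Bk (so repeated blocks are
   allowed: a "family"), incidence is inc x b. *)
Definition is_TD (X Bk : finType) (inc : X -> Bk -> bool)
    (lam k g : nat) (pc : X -> 'I_k) : Prop :=
  [/\ (2 <= g)%N,
      forall i : 'I_k, #|[set x | pc x == i]| = g,
      forall (b : Bk) (i : 'I_k), #|[set x | (pc x == i) && inc x b]| = 1 &
      forall x y : X, pc x != pc y -> #|[set b | inc x b && inc y b]| = lam].

Definition is_STD (X Bk : finType) (inc : X -> Bk -> bool)
    (lam k g : nat) (pc : X -> 'I_k) (bc : Bk -> 'I_k) : Prop :=
  is_TD X Bk inc lam k g pc /\ is_TD Bk X (fun b x => inc x b) lam k g bc.

Definition incidence_adj (X Bk : finType) (inc : X -> Bk -> bool) : rel (X + Bk) :=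
  fun u v => match u, v with
             | inl x, inr b => inc x b
             | inr b, inl x => inc x b
             | _, _ => false
             end.

Section Metric.
Variable V : finType.
Variable adj : rel V.

Fixpoint ball (m : nat) (u : V) : {set V} :=
  match m with
  | 0 => [set u]
  | m'.+1 => ball m' u :|: [set v | [exists w in ball m' u, adj w v]]
  end.

(* graph distance: least m with v in ball m u (for a connected graph this is
   the usual distance, always < #|V|); #|V| if unreachable. *)
Definition gdist (u v : V) : nat :=
  find (fun m => v \in ball m u) (iota 0 #|V|).

Definition resolving (S : {set V}) : Prop :=
  forall u w : V, u != w -> exists2 s, s \in S & gdist u s != gdist w s.

Definition resolvingb (S : {set V}) : bool :=
  [forall u, forall w, (u != w) ==> [exists s in S, gdist u s != gdist w s]].

(* metric dimension: minimum cardinality of a resolving set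
   ([set: V] is always resolving, so the arg min is well defined). *)
Definition metric_dim : nat :=
  #|[arg min_(S < [set: V] | resolvingb S) #|S|]|.
End Metric.

(* Main.v *)
Require Import Defs.
From mathcomp Require Import all_boot.
From Stdlib Require Import Reals.
From mathcomp Require Import zify.
From Stdlib Require Import Lra.

Arguments ball {V}.
Arguments gdist {V}.
Arguments resolving {V}.

Module G1.
Import ssrnat.

Lemma card_sumb (T : finType) (P : pred T) : #|[set t | P t]| = \sum_t (P t : nat).
Proof. rewrite -sum1_card big_mkcond /=; apply: eq_bigr => t _; rewrite inE; by case: (P t). Qed.

Lemma card_part (T : finType) k (f : T -> 'I_k) (P : pred T) :
  #|[set t | P t]| = \sum_(i < k) #|[set t | (f t == i) && P t]|.
Proof.
rewrite card_sumb. transitivity (\sum_(i < k) \sum_t ((f t == i) && P t : nat)); last first.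
  by apply: eq_bigr => i _; rewrite card_sumb.
rewrite exchange_big /=. apply: eq_bigr => t _.
rewrite (bigD1 (f t)) //= eqxx big1 ?addn0 // => i ne.
by rewrite eq_sym (negbTE ne).
Qed.

Lemma avg (T I : finType) (sep : T -> I -> bool) g (R : {set I}) :
  (forall p, p \in R -> 0 < #|[set t | sep t p]| /\ #|T| <= g * #|[set t | sep t p]|) ->
  R != set0 -> exists t, #|R| <= g * #|[set p in R | sep t p]|.
Proof.
move=> H /set0Pn [p0 Hp0].
case: (pickP (fun t => #|R| <= g * #|[set p in R | sep t p]|)) => [t Ht|Hn]; first by exists t.
exfalso.
have Hsum : \sum_t #|[set p in R | sep t p]| = \sum_(p in R) #|[set t | sep t p]|.
  transitivity (\sum_t \sum_p ((p \in R) && sep t p : nat)).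
    by apply: eq_bigr => t _; rewrite card_sumb.
  rewrite exchange_big /= [RHS]big_mkcond /=; apply: eq_bigr => p _.
  rewrite card_sumb; case: (p \in R) => //=; by apply: big1.
have h1 : #|R| * #|T| <= g * \sum_(p in R) #|[set t | sep t p]|.
  rewrite big_distrr /= -sum1_card big_distrl /=.
  apply: leq_sum => p Hp; rewrite mul1n; exact: (H p Hp).2.
have h2 : \sum_t (g * #|[set p in R | sep t p]| + 1) <= \sum_(t : T) #|R|.
  apply: leq_sum => t _; move: (Hn t) => /= /negbT; rewrite -ltnNge addn1; done.
rewrite big_split /= -big_distrr /= Hsum sum1_card sum_nat_const in h2.
have hT : 0 < #|T|.
  have [h _] := H p0 Hp0; apply: leq_trans h _; exact: max_card.
have e : #|(xpredT : pred T)| = #|T| by apply: eq_card.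
rewrite e in h2. nia.
Qed.

End G1.
Import G1.

Module G2.
Import ssrnat.

Definition rem_set (T I : finType) (sep : T -> I -> bool) (P : {set I}) (S : {set T}) :=
  [set p in P | ~~ [exists t in S, sep t p]].

Arguments rem_set {T I}.
Arguments avg {T I sep g R}.

Lemma rem_sub (T I : finType) (sep : T -> I -> bool) P S : rem_set sep P S \subset P.
Proof. apply/subsetP => p; rewrite inE; by case/andP. Qed.

Lemma halve (T I : finType) (sep : T -> I -> bool) g (P : {set I}) :
  0 < g ->
  (forall p, p \in P -> 0 < #|[set t | sep t p]| /\ #|T| <= g * #|[set t | sep t p]|) ->
  exists S : {set T}, #|S| <= g /\ 2 * #|rem_set sep P S| <= #|P|.
Proof.
move=> g0 H.
have key : forall j, j <= g -> exists S : {set T}, #|S| <= j /\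
   (2 * #|rem_set sep P S| <= #|P| \/ j * #|P| <= 2 * g * (#|P| - #|rem_set sep P S|)).
  elim=> [|j IH] Hj.
    exists set0; split; [by rewrite cards0 | by right].
  have [S [HS Hor]] := IH (ltnW Hj).
  case: (leqP (2 * #|rem_set sep P S|) #|P|) => Hc.
    exists S; split; [exact: leqW | by left].
  case: Hor => [Hc'|Hor]; first by move: Hc' Hc; lia.
  set R := rem_set sep P S.
  have HR : R != set0.
    apply/negP => /eqP E; move: Hc; rewrite -/R E cards0; lia.
  have HRP : R \subset P := rem_sub _ _ sep P S.
  have [t Ht] := @avg _ _ _ _ R (fun p Hp => H p (subsetP HRP p Hp)) HR.
  set A := [set p in R | sep t p].
  have eR : rem_set sep P (t |: S) = R :\: A.
    apply/setP => p.
    have E : [exists t0 in t |: S, sep t0 p] = sep t p || [exists t0 in S, sep t0 p].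
      apply/existsP/orP => [[t0 /andP [Ht0 Hs]]|[Hs|/existsP [t0 /andP [Ht0 Hs]]]].
      - move: Ht0; rewrite !inE => /orP [/eqP Et|Ht0].
          by left; rewrite -Et.
        by right; apply/existsP; exists t0; rewrite Ht0.
      - by exists t; rewrite !inE eqxx.
      - by exists t0; rewrite !inE Ht0 orbT.
    rewrite /rem_set in_setD /R /A !in_set E.
    by case: (p \in P); case: (sep t p); case: ([exists t0 in S, sep t0 p]).
  have cA : #|R :\: A| = #|R| - #|A|.
    rewrite cardsD (setIidPr _) //; apply/subsetP => q; rewrite inE => /andP [] //.
  have AR : #|A| <= #|R| by apply: subset_leq_card; apply/subsetP => q; rewrite inE => /andP [] //.
  have RP : #|R| <= #|P| by apply: subset_leq_card.
  exists (t |: S); split.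
    rewrite cardsU1; move: HS; case: (t \in S) => /=; lia.
  right; rewrite eR cA.
  move: Hor Ht Hc AR RP; rewrite -/R -/A.
  move: #|A| #|R| #|P| => a r q. nia.
have [S [HS Hor]] := key g (leqnn g).
exists S; split => //.
case: Hor => // h.
have : #|rem_set sep P S| <= #|P| by apply: subset_leq_card; exact: rem_sub _ _ sep P S.
move: h; nia.
Qed.

Lemma greedy (T I : finType) (sep : T -> I -> bool) g m :
  0 < g -> forall (P : {set I}),
  (forall p, p \in P -> 0 < #|[set t | sep t p]| /\ #|T| <= g * #|[set t | sep t p]|) ->
  #|P| < 2 ^ m ->
  exists S : {set T}, #|S| <= g * m /\ forall p, p \in P -> exists2 t, t \in S & sep t p.
Proof.
move=> g0; elim: m => [|m IH] P H HP.
  exists set0; split; first by rewrite cards0.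
  move=> p Hp; exfalso; move: HP; rewrite expn0 ltnS leqn0 => /eqP /cards0_eq E.
  by rewrite E inE in Hp.
have [S0 [HS0 Hr]] := @halve _ _ _ _ _ g0 H.
have HRP := rem_sub _ _ sep P S0.
have [|S1 [HS1 Hc]] := IH (rem_set sep P S0) (fun p Hp => H p (subsetP HRP p Hp)).
  move: Hr HP; rewrite expnS; lia.
exists (S0 :|: S1); split.
  apply: leq_trans (leq_card_setU _ _) _; rewrite mulnS; exact: leq_add.
move=> p Hp.
case E : [exists t in S0, sep t p].
  move/existsP: E => [t /andP [Ht Hs]]; exists t => //; by rewrite inE Ht.
have [t Ht Hs] : exists2 t, t \in S1 & sep t p.
  apply: Hc; by rewrite inE Hp E.
by exists t; rewrite // inE Ht orbT.
Qed.

End G2.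
Import G2.

Module G3.
Import ssrnat.
Set Implicit Arguments. Unset Strict Implicit.


Lemma ball_step (V : finType) (adj : rel V) m u w v :
  w \in ball adj m u -> adj w v -> v \in ball adj m.+1 u.
Proof. move=> Hw Ha /=; rewrite in_setU; apply/orP; right; rewrite inE; apply/existsP; exists w; by rewrite Hw. Qed.

Lemma ball_S (V : finType) (adj : rel V) m u v :
  v \in ball adj m u -> v \in ball adj m.+1 u.
Proof. move=> Hv /=; by rewrite in_setU Hv. Qed.

Lemma ball_mono (V : finType) (adj : rel V) m n u v :
  m <= n -> v \in ball adj m u -> v \in ball adj n u.
Proof.
move=> Hmn Hv; elim: n Hmn => [|n IH] Hmn.
  by move: Hmn; rewrite leqn0 => /eqP E; subst m.
move: Hmn; rewrite leq_eqVlt => /orP [/eqP E|Hlt]; first by subst m.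
apply: ball_S; exact: IH.
Qed.

Lemma ball0 (V : finType) (adj : rel V) u v : (v \in ball adj 0 u) = (v == u).
Proof. by rewrite /= inE. Qed.

Lemma ball1 (V : finType) (adj : rel V) u v : v \in ball adj 1 u -> (v == u) || adj u v.
Proof.
rewrite /= in_setU inE => /orP [->//|]; rewrite inE => /existsP [w /andP [Hw Ha]].
by move: Hw; rewrite inE => /eqP E; subst w; rewrite Ha orbT.
Qed.

Lemma ball_trans (V : finType) (adj : rel V) m n u v w :
  v \in ball adj m u -> w \in ball adj n v -> w \in ball adj (m + n) u.
Proof.
move=> Hv; elim: n w => [|n IH] w.
  by rewrite ball0 addn0 => /eqP ->.
rewrite /= in_setU => /orP [Hw|]; rewrite addnS.
  apply: ball_S; exact: IH.
rewrite inE => /existsP [w' /andP [Hw' Ha]]; apply: ball_step (IH _ Hw') Ha.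
Qed.

Lemma gdist_ball (V : finType) (adj : rel V) u v :
  gdist adj u v < #|V| -> v \in ball adj (gdist adj u v) u.
Proof.
move=> H.
have Hh : has (fun m => v \in ball adj m u) (iota 0 #|V|) by rewrite has_find size_iota.
have := nth_find 0 Hh; rewrite nth_iota; last by rewrite -/(gdist adj u v).
done.
Qed.

Lemma gdist_le (V : finType) (adj : rel V) m u v :
  v \in ball adj m u -> m < #|V| -> gdist adj u v <= m.
Proof.
move=> Hv Hm; rewrite leqNgt; apply/negP => Hlt.
have := before_find 0 Hlt; rewrite nth_iota // add0n Hv. done.
Qed.

Lemma gdist_min (V : finType) (adj : rel V) j u v :
  j < gdist adj u v -> v \notin ball adj j u.
Proof.
move=> Hlt.
have Hj : j < #|V|.
  apply: leq_trans Hlt _; rewrite /gdist; rewrite -[X in _ <= X](size_iota 0); exact: find_size.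
have := before_find 0 Hlt; rewrite nth_iota // add0n => ->. done.
Qed.

Lemma gdist_adj (V : finType) (adj : rel V) u v :
  u != v -> 1 < #|V| -> (gdist adj u v == 1) = adj u v.
Proof.
move=> Huv HV; apply/eqP/idP => [H|Ha].
  have := gdist_ball (leq_trans (eq_leq (f_equal S H)) HV); rewrite H => /ball1.
  by rewrite eq_sym (negbTE Huv).
have Hb : v \in ball adj 1 u by apply: (@ball_step _ _ 0 u u); rewrite // ball0.
have := gdist_le Hb HV.
have : 0 < gdist adj u v.
  rewrite lt0n; apply/negP => /eqP H0.
  have := gdist_ball (V:=V) (adj:=adj) (u:=u) (v:=v); rewrite H0 => /(_ (ltnW HV)).
  by rewrite ball0 eq_sym (negbTE Huv).
lia.
Qed.

Lemma gdist0 (V : finType) (adj : rel V) u : gdist adj u u = 0.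
Proof.
have : gdist adj u u <= 0 by apply: gdist_le; rewrite ?ball0 //; apply/card_gt0P; exists u.
by rewrite leqn0 => /eqP.
Qed.

Lemma gdist_neq0 (V : finType) (adj : rel V) u v : u != v -> gdist adj v u != 0.
Proof.
move=> Huv; apply/eqP => H0.
have HV : 0 < #|V| by apply/card_gt0P; exists u.
have := @gdist_ball V adj v u; rewrite H0 => /(_ HV); rewrite ball0 => /eqP E.
by rewrite E eqxx in Huv.
Qed.

Lemma ball_parity (V : finType) (adj : rel V) (side : V -> bool)
  (hb : forall a b, adj a b -> side b = ~~ side a) m u v :
  v \in ball adj m u -> (forall j, j < m -> v \notin ball adj j u) -> side v = side u (+) odd m.
Proof.
elim: m v => [|m IH] v.
  by rewrite ball0 => /eqP -> _; rewrite addbF.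
rewrite /= in_setU => /orP [Hv|Hv] Hmin.
  by move: (Hmin m (ltnSn m)); rewrite Hv.
move: Hv; rewrite inE => /existsP [w /andP [Hw Ha]].
have Hw' : forall j, j < m -> w \notin ball adj j u.
  move=> j Hj; apply/negP => Hwj.
  by move: (Hmin j.+1 Hj); rewrite (ball_step Hwj Ha).
rewrite (hb _ _ Ha) (IH w Hw Hw') addbN.
done.
Qed.

Lemma gdist_parity (V : finType) (adj : rel V) (side : V -> bool)
  (hb : forall a b, adj a b -> side b = ~~ side a) m u v :
  v \in ball adj m u -> m < #|V| -> side v = side u (+) odd (gdist adj u v).
Proof.
move=> Hv Hm.
have Hle := gdist_le Hv Hm.
apply: (ball_parity hb).
  apply: gdist_ball; exact: leq_ltn_trans Hle Hm.
move=> j Hj; exact: gdist_min.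
Qed.

Lemma resolving_md (V : finType) (adj : rel V) (S : {set V}) :
  resolving adj S -> metric_dim _ adj <= #|S|.
Proof.
move=> HS; rewrite /metric_dim.
case: arg_minnP => [|S0 _ Hmin].
  apply/forallP => u; apply/forallP => w; apply/implyP => H.
  apply/existsP; exists u; rewrite inE /= gdist0 eq_sym; exact: gdist_neq0.
apply: Hmin.
apply/forallP => u; apply/forallP => w; apply/implyP => H.
have [s Hs Hd] := HS u w H; apply/existsP; exists s; by rewrite Hs Hd.
Qed.

Lemma md_card (V : finType) (adj : rel V) : metric_dim _ adj <= #|V|.
Proof.
rewrite -cardsT; apply: resolving_md => u w H.
exists u; rewrite ?inE // gdist0 eq_sym; exact: gdist_neq0.
Qed.

End G3.
Import G3.

Module G4.
Import ssrnat.
Set Implicit Arguments. Unset Strict Implicit.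

Lemma card_classes (T : finType) k (f : T -> 'I_k) g :
  (forall i, #|[set t | f t == i]| = g) -> #|T| = k * g.
Proof.
move=> H; rewrite -cardsT (@card_part _ k f predT).
rewrite (eq_bigr (fun _ => g)); first by rewrite sum_nat_const card_ord.
move=> i _; rewrite -(H i); apply: eq_card => t; by rewrite !inE andbT.
Qed.

Lemma card_ex (T : finType) (P : pred T) : 0 < #|[set t | P t]| -> exists t, P t.
Proof. rewrite card_gt0 => /set0Pn [t]; rewrite inE; by exists t. Qed.

Lemma std_r X Bk inc lam k g pc bc : is_STD X Bk inc lam k g pc bc ->
  forall x, #|[set b | inc x b]| = k.
Proof.
case=> _ [_ _ H3 _] x.
rewrite (@card_part _ k bc) (eq_bigr (fun _ => 1)); first by rewrite sum_nat_const card_ord muln1.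
move=> i _; exact: H3.
Qed.

Lemma std_same X Bk inc lam k g pc bc : is_STD X Bk inc lam k g pc bc ->
  forall x y b, x != y -> pc x = pc y -> inc x b -> inc y b -> False.
Proof.
case=> [[_ _ H3 _] _] x y b Hxy Hp Hx Hy.
have := H3 b (pc x).
have : [set x; y] \subset [set z | (pc z == pc x) && inc z b].
  apply/subsetP => z; rewrite !inE => /orP [/eqP ->|/eqP ->]; by rewrite ?Hx ?Hy ?Hp eqxx.
move/subset_leq_card; rewrite cards2 Hxy => h E; by rewrite E in h.
Qed.

Lemma std_k X Bk inc lam k g pc bc : is_STD X Bk inc lam k g pc bc ->
  forall x y : X, pc x != pc y -> k = lam * g.
Proof.
move=> Hs x y Hxy.
have Hr := std_r Hs x.
case: Hs => [[_ H2 H3 H4] _].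
set i := pc y.
have E1 : \sum_(z | pc z == i) #|[set b | inc x b && inc z b]| = lam * g.
  rewrite (eq_bigr (fun _ => lam)).
    by rewrite sum_nat_const -(H2 i) mulnC; congr (_ * _); apply: eq_card => z; rewrite inE.
  move=> z /eqP Hz; apply: H4; by rewrite Hz.
have E2 : \sum_(z | pc z == i) #|[set b | inc x b && inc z b]| = k.
  rewrite -[RHS]Hr.
  transitivity (\sum_(z | pc z == i) \sum_b (inc x b && inc z b : nat)).
    by apply: eq_bigr => z _; rewrite card_sumb.
  rewrite exchange_big /= card_sumb; apply: eq_bigr => b _.
  case: (inc x b) => /=; last by rewrite big1.
  rewrite -(H3 b i) card_sumb big_mkcond /=; apply: eq_bigr => z _.
  by case: (pc z == i).
by rewrite -E2 E1.
Qed.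

Lemma std_sep X Bk inc lam k g pc bc : (1 <= lam) -> is_STD X Bk inc lam k g pc bc ->
  forall x y : X, x != y ->
  0 < #|[set b | inc x b != inc y b]| /\ #|Bk| <= g * #|[set b | inc x b != inc y b]|.
Proof.
move=> Hl Hs x y Hxy.
have Hrx := std_r Hs x; have Hry := std_r Hs y.
have HB : #|Bk| = k * g.
  case: Hs => _ [_ H2 _ _]; exact: card_classes H2.
have Hg : 2 <= g by case: Hs => [[]].
have Hsum : #|[set b | inc x b]| + #|[set b | inc y b]| =
   #|[set b | inc x b != inc y b]| + 2 * #|[set b | inc x b && inc y b]|.
  rewrite !card_sumb big_distrr /= -!big_split /=; apply: eq_bigr => b _.
  by case: (inc x b); case: (inc y b).
have Hk : 0 < k by move: (ltn_ord (pc x)); lia.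
have Hb : k <= #|[set b | inc x b != inc y b]|.
  case: (eqVneq (pc x) (pc y)) => Hp.
    have E : #|[set b | inc x b && inc y b]| = 0.
      apply/eqP; rewrite cards_eq0; apply/eqP/setP => b; rewrite !inE.
      apply/negP => /andP [h1 h2]; exact: (std_same Hs Hxy Hp h1 h2).
    move: Hsum; rewrite E Hrx Hry; lia.
  have E : #|[set b | inc x b && inc y b]| = lam.
    by case: Hs => [[_ _ _ H4] _]; apply: H4.
  have Ek := std_k Hs Hp.
  move: Hsum; rewrite E Hrx Hry Ek; nia.
split; first exact: leq_trans Hk Hb.
rewrite HB mulnC; exact: leq_mul.
Qed.

End G4.
Import G4.

Module G5.
Import ssrnat.
Set Implicit Arguments. Unset Strict Implicit.

Lemma other_class k (i : 'I_k) : 1 < k -> exists j : 'I_k, j != i.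
Proof.
move=> Hk.
case: (eqVneq i (Ordinal (ltnW Hk))) => [E|N]; last by exists (Ordinal (ltnW Hk)); rewrite eq_sym.
exists (Ordinal Hk); rewrite E; apply/eqP => /(f_equal val) /=; done.
Qed.

Lemma reach_point X Bk inc lam k g pc bc : 1 <= lam -> 1 < k -> is_STD X Bk inc lam k g pc bc ->
  forall x v, v \in ball (incidence_adj X Bk inc) 4 (inl x).
Proof.
move=> Hl Hk Hs x.
have [[_ H2 H3 H4] [_ H2' H3' H4']] := Hs.
set adj := incidence_adj X Bk inc.
have B0 : inl x \in ball adj 0 (inl x) by rewrite ball0.
have P2 : forall y, pc y != pc x -> inl y \in ball adj 2 (inl x).
  move=> y Hy.
  have [b /andP [hx hy]] : exists b, inc x b && inc y b.
    apply: card_ex; rewrite H4 //; by rewrite eq_sym.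
  apply: (@ball_step _ _ 1 _ (inr b)) => //.
  exact: (@ball_step _ _ 0 _ (inl x)).
have [i Hi] := other_class (pc x) Hk.
have P3 : forall b, inr b \in ball adj 3 (inl x).
  move=> b.
  have [z /andP [/eqP hz hb]] : exists z, (pc z == i) && inc z b by apply: card_ex; rewrite H3.
  apply: (@ball_step _ _ 2 _ (inl z)) => //; apply: P2; by rewrite hz.
case=> [y|b]; last by apply: ball_S.
have [b /andP [_ hb]] : exists b, (bc b == pc y) && inc y b by apply: card_ex; rewrite H3'.
exact: (@ball_step _ _ 3 _ (inr b)).
Qed.

Lemma reach_block X Bk inc lam k g pc bc : 1 <= lam -> 1 < k -> is_STD X Bk inc lam k g pc bc ->
  forall b v, v \in ball (incidence_adj X Bk inc) 5 (inr b).
Proof.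
move=> Hl Hk Hs b v.
have [[_ H2 H3 H4] _] := Hs.
have [x /andP [_ hx]] : exists x, (pc x == Ordinal (ltnW Hk)) && inc x b by apply: card_ex; rewrite H3.
have h1 : inl x \in ball (incidence_adj X Bk inc) 1 (inr b).
  apply: (@ball_step _ _ 0 _ (inr b)) => //; by rewrite ball0.
exact: (ball_trans h1 (reach_point Hl Hk Hs x v)).
Qed.

End G5.
Import G5.

Module G6.
Import ssrnat.
Set Implicit Arguments. Unset Strict Implicit.

Lemma std_dual X Bk inc lam k g pc bc : is_STD X Bk inc lam k g pc bc ->
  is_STD Bk X (fun b x => inc x b) lam k g bc pc.
Proof. by case=> H1 H2; split. Qed.

Lemma md_bound lam k g X Bk inc pc bc : 1 <= lam -> is_STD X Bk inc lam k g pc bc ->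
  metric_dim _ (incidence_adj X Bk inc) <= 4 * g * trunc_log 2 (k * g) + 4 * g + 1 /\
  2 ^ trunc_log 2 (k * g) <= lam * g ^ 2.
Proof.
move=> Hl Hs.
have Hg : 2 <= g by case: Hs => [[]].
have HX : #|X| = k * g by case: Hs => [[_ H2 _ _] _]; exact: card_classes H2.
have HB : #|Bk| = k * g by case: Hs => [_ [_ H2 _ _]]; exact: card_classes H2.
set tl := trunc_log 2 (k * g).
case: (leqP k 1) => Hk.
  split.
    apply: leq_trans (md_card _) _; rewrite card_sum HX HB; nia.
  case: (posnP (k * g)) => H0; first by rewrite /tl H0 trunc_log0 expn0; nia.
  apply: leq_trans (trunc_logP (leqnn 2) H0) _; nia.
have [x0 /eqP hx0] : exists x0 : X, pc x0 == Ordinal (ltnW Hk).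
  have [[_ H2 _ _] _] := Hs; apply: card_ex; rewrite H2; lia.
have [y0 /eqP hy0] : exists y0 : X, pc y0 == Ordinal Hk.
  have [[_ H2 _ _] _] := Hs; apply: card_ex; rewrite H2; lia.
have Hkl : k = lam * g.
  apply: (std_k Hs (x := x0) (y := y0)).
  by rewrite hx0 hy0; apply/eqP => /(f_equal val).
have Hkg : 0 < k * g by nia.
have Htl1 : k * g < 2 ^ tl.+1 := trunc_log_ltn _ (leqnn 2).
have Htl2 : 2 ^ tl <= k * g := trunc_logP (leqnn 2) Hkg.
split; last by apply: leq_trans Htl2 _; rewrite Hkl; nia.
set M := 2 * tl + 2.
have HM : (k * g) * (k * g) < 2 ^ M.
  rewrite /M (_ : 2 * tl + 2 = tl.+1 + tl.+1) ?expnD; last lia.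
  exact: ltn_mul.
have H1 : forall p, p \in [set p : X * X | p.1 != p.2] ->
   0 < #|[set b | inc p.1 b != inc p.2 b]| /\ #|Bk| <= g * #|[set b | inc p.1 b != inc p.2 b]|.
  move=> p; rewrite inE => Hp; exact: std_sep Hl Hs _ _ Hp.
have H1' : #|[set p : X * X | p.1 != p.2]| < 2 ^ M.
  apply: leq_ltn_trans (max_card _) _; by rewrite card_prod HX.
have [SB [HSB cSB]] := @greedy _ _ _ g M (ltnW Hg) _ H1 H1'.
have H2 : forall p, p \in [set p : Bk * Bk | p.1 != p.2] ->
   0 < #|[set x | inc x p.1 != inc x p.2]| /\ #|X| <= g * #|[set x | inc x p.1 != inc x p.2]|.
  move=> p; rewrite inE => Hp; exact: std_sep Hl (std_dual Hs) _ _ Hp.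
have H2' : #|[set p : Bk * Bk | p.1 != p.2]| < 2 ^ M.
  apply: leq_ltn_trans (max_card _) _; by rewrite card_prod HB.
have [SX [HSX cSX]] := @greedy _ _ _ g M (ltnW Hg) _ H2 H2'.
set adj := incidence_adj X Bk inc.
set L : {set X + Bk} := [set inr b | b in SB] :|: [set inl x | x in SX] :|: [set inl x0].
have HV : 5 < #|{: X + Bk}| by rewrite card_sum HX HB; nia.
have HL : #|L| <= 4 * g * tl + 4 * g + 1.
  apply: leq_trans (leq_card_setU _ _) _; rewrite cards1.
  have := (leq_card_setU [set inr b | b in SB] [set inl x | x in SX]).1.
  have := leq_imset_card (@inr X Bk) SB; have := leq_imset_card (@inl X Bk) SX.
  move: HSB HSX; rewrite /M => h1 h2 h3 h4 h5. apply: (leq_trans (leq_add h5 (leqnn 1))). apply: leq_trans (leq_add (leq_add h4 h3) (leqnn 1)) _. nia.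
apply: leq_trans (resolving_md _) HL.
set side := fun v : X + Bk => if v is inr _ then true else false.
have hb : forall a b, adj a b -> side b = ~~ side a by case=> [a|a] [b|b].
have par : forall u, side (inl x0) = side u (+) odd (gdist adj u (inl x0)).
  case=> [x|b].
    apply: (gdist_parity hb (m := 4)); [exact: (reach_point Hl Hk Hs) | exact: ltnW HV].
  apply: (gdist_parity hb (m := 5)); [exact: (reach_block Hl Hk Hs) | exact: HV].
have HV1 : 1 < #|{: X + Bk}| by apply: leq_trans HV.
move=> u w Huw.
case: u Huw => [x|b]; case: w => [y|b'] Huw.
- have Hxy : x != y by apply: contraNneq Huw => ->.
  have [b Hb Hsep] : exists2 b, b \in SB & inc x b != inc y b by apply: (cSB (x, y)); rewrite inE.
  exists (inr b); first by rewrite !inE; apply/orP; left; apply/orP; left; apply/imsetP; exists b.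
  apply/negP => /eqP E.
  have e1 := @gdist_adj _ adj (inl x) (inr b) isT HV1.
  have e2 := @gdist_adj _ adj (inl y) (inr b) isT HV1.
  by move: Hsep; rewrite /= -[inc x b]e1 -[inc y b]e2 E eqxx.
- exists (inl x0); first by rewrite !inE eqxx orbT.
  have o1 := par (inl x); have o2 := par (inr b'); rewrite /side /= in o1 o2.
  apply/eqP => E; rewrite E in o1; rewrite -o1 in o2; by move: o2.
- exists (inl x0); first by rewrite !inE eqxx orbT.
  have o1 := par (inr b); have o2 := par (inl y); rewrite /side /= in o1 o2.
  apply/eqP => E; rewrite E in o1; rewrite -o2 in o1; by move: o1.
- have Hbb : b != b' by apply: contraNneq Huw => ->.
  have [x Hx Hsep] : exists2 x, x \in SX & inc x b != inc x b' by apply: (cSX (b, b')); rewrite inE.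
  exists (inl x); first by rewrite !inE; apply/orP; left; apply/orP; right; apply/imsetP; exists x.
  apply/negP => /eqP E.
  have e1 := @gdist_adj _ adj (inr b) (inl x) isT HV1.
  have e2 := @gdist_adj _ adj (inr b') (inl x) isT HV1.
  by move: Hsep; rewrite /= -[inc x b]e1 -[inc x b']e2 E eqxx.
Qed.

Lemma expn_pow m n : expn m n = Nat.pow m n.
Proof. elim: n => [|n IH]; by rewrite ?expn0 // expnS IH. Qed.
End G6.
Import G6.

Module G7.
Local Open Scope R_scope.

Lemma ln_le' x y : 0 < x -> x <= y -> ln x <= ln y.
Proof. intros Hx Hxy. destruct (Rle_lt_or_eq_dec _ _ Hxy) as [H|H].
- left; apply ln_increasing; lra.
- subst; right; reflexivity. Qed.

Lemma real_bound (g lam tl md : nat) :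
  (2 <= g)%coq_nat -> (1 <= lam)%coq_nat -> (md <= 4*g*tl + 4*g + 1)%coq_nat -> (2^tl <= lam*g^2)%coq_nat ->
  INR md <= 20 * sqrt (INR (2*lam*g^2)) * ln (INR (2*lam*g^2)).
Proof.
intros Hg Hl Hmd Ht.
replace (Nat.pow g 2) with (g*g)%coq_nat in * by (cbn; lia).
set (n := muln (muln 2 lam) (Nat.mul g g)).
assert (Hn8 : (8 <= n)%coq_nat) by (unfold n; nia).
assert (HgN : (g*g <= n)%coq_nat) by (unfold n; nia).
assert (HtN : (2^tl <= n)%coq_nat) by (unfold n; lia).
assert (HmdR : INR md <= 4 * INR g * INR tl + 4 * INR g + 1).
{ apply le_INR in Hmd. move: Hmd. rewrite ?plus_INR ?mult_INR. simpl. lra. }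
assert (HG : 2 <= INR g) by (apply le_INR in Hg; simpl in Hg; lra).
assert (HN8 : 8 <= INR n) by (apply le_INR in Hn8; simpl in Hn8; lra).
assert (Hsq : INR g <= sqrt (INR n)).
{ have E := sqrt_square (INR g). rewrite -E; [|lra]. apply sqrt_le_1_alt.
  apply le_INR in HgN. move: HgN. rewrite mult_INR. done. }
assert (Hln2 := ln_lt_2).
assert (HTl : INR tl * ln 2 <= ln (INR n)).
{ rewrite -ln_pow; [|lra]. apply ln_le'. apply pow_lt; lra.
  apply le_INR in HtN. move: HtN. rewrite pow_INR. simpl. done. }
assert (HL : 3 * ln 2 <= ln (INR n)).
{ replace (3 * ln 2) with (INR 3 * ln 2) by (simpl; ring). rewrite -ln_pow; [|lra].
  apply ln_le'. apply pow_lt; lra. simpl. lra. }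
assert (HT0 : 0 <= INR tl) by apply pos_INR.
assert (HTl2 : INR tl <= 2 * ln (INR n)) by nra.
set (L := ln (INR n)) in *.
set (S := sqrt (INR n)) in *.
assert (HL0 : 3/2 <= L) by lra.
nra.
Qed.
End G7.
Import G7.

Theorem corollary3p5 :
  exists C : R,
    forall (lam k g : nat) (X Bk : finType) (inc : X -> Bk -> bool)
           (pc : X -> 'I_k) (bc : Bk -> 'I_k),
      (1 <= lam)%N -> (2 <= g)%N ->
      is_STD X Bk inc lam k g pc bc ->
      let n := (2 * lam * g ^ 2)%N in
      (INR (metric_dim (X + Bk)%type (incidence_adj X Bk inc)) <= C * sqrt (INR n) * ln (INR n))%R.
Proof.
exists 20%R => lam k g X Bk inc pc bc Hl Hg Hs n.
have [Hmd Ht] := md_bound Hl Hs.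
apply: (@real_bound g lam (trunc_log 2 (k * g))).
- by apply/leP.
- by apply/leP.
- apply/leP. move: Hmd. done.
- apply/leP. move: Ht. rewrite !expn_pow. done.
Qed.
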